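(* Let $D\subseteq\mathbb{R}^s$ be closed and $\bar y\in D$. Then for every integer $l\ge1$ and every collection of directions $v_1,\dots,v_l\in\mathbb{R}^s$ we have \[\widehat N_{T^{l-1}_D(\bar y;v_1,\dots,v_{l-1})}(v_l)\subseteq N_{T^{l-1}_D(\bar y;v_1,\dots,v_{l-1})}(v_l)\subseteq N_{T_D(\bar y)}(0)\subseteq N_D(\bar y).\]
   Context: Tangent cone: $T_\Omega(\bar z)=\{w\mid \exists t_k\downarrow0,\ w_k\to w,\ \bar z+t_kw_k\in\Omega\}$. Regular normal cone $\widehat N_\Omega(\bar z)=\{z^\ast\mid\langle z^\ast,w\rangle\le0\ \forall w\in T_\Omega(\bar z)\}$. Limiting normal cone $N_\Omega(\bar z)=\{z^\ast\mid\exists z_k\to\bar z,\ z_k\in\Omega,\ z^\ast_k\to z^\ast,\ z_k^\ast\in\widehat N_\Omega(z_k)\}$. If $\bar z\notin\Omega$, all three cones are defined to be $\emptyset$. Higher-order tangent cones: $T^0_D(\bar y)=T_D(\bar y)$ and $T^k_D(\bar y;v_1,\dots,v_k)=T_{T^{k-1}_D(\bar y;v_1,\dots,v_{k-1})}(v_k)$ for $k\ge1$. *)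

(* Defs.v *)
From HB Require Import structures.
From mathcomp Require Import all_boot all_order all_algebra.
From mathcomp Require Import all_classical all_reals all_analysis.
Set Implicit Arguments. Unset Strict Implicit. Unset Printing Implicit Defensive.
Import Order.TTheory GRing.Theory Num.Theory.
Import numFieldNormedType.Exports.
Local Open Scope classical_set_scope.
Local Open Scope ring_scope.

Section Cones.
Variables (R : realType) (s : nat).
Local Notation vec := 'rV[R]_s.

Definition dotv (a b : vec) : R := \sum_(i < s) a 0 i * b 0 i.

(* Tangent (Bouligand) cone; empty when z is not in Omega. *)
Definition tangent_cone (Om : set vec) (z : vec) : set vec :=
  fun w => Om z /\
    exists (t : nat -> R) (wk : nat -> vec),
      (forall k, 0 < t k) /\ t @ \oo --> (0 : R) /\ wk @ \oo --> w /\
      (forall k, Om (z + t k *: wk k)).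

(* Regular (Fréchet) normal cone; empty when z is not in Omega. *)
Definition regular_normal_cone (Om : set vec) (z : vec) : set vec :=
  fun zs => Om z /\ forall w, tangent_cone Om z w -> dotv zs w <= 0.

(* Limiting (Mordukhovich) normal cone; empty when z is not in Omega. *)
Definition limiting_normal_cone (Om : set vec) (z : vec) : set vec :=
  fun zs => Om z /\
    exists (zk : nat -> vec) (zsk : nat -> vec),
      zk @ \oo --> z /\ (forall k, Om (zk k)) /\ zsk @ \oo --> zs /\
      (forall k, regular_normal_cone Om (zk k) (zsk k)).

(* Higher-order tangent cones T^k_D(y; v 1, ..., v k), directions indexed
   from 1: T^0 = T_D(y), T^(k+1) = T_{T^k}(v (k+1)). *)
Fixpoint higher_tangent_cone (D : set vec) (y : vec) (v : nat -> vec) (k : nat)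
  : set vec :=
  match k with
  | 0 => tangent_cone D y
  | k'.+1 => tangent_cone (higher_tangent_cone D y v k') (v k'.+1)
  end.

End Cones.

(* Main.v *)
Require Import Defs.
From HB Require Import structures.
From mathcomp Require Import all_boot all_order all_algebra.
From mathcomp Require Import all_classical all_reals all_analysis.
From mathcomp Require Import ring lra.
Set Implicit Arguments. Unset Strict Implicit. Unset Printing Implicit Defensive.
Import Order.TTheory GRing.Theory Num.Theory Num.Def.
Import numFieldNormedType.Exports.
Local Open Scope classical_set_scope.
Local Open Scope ring_scope.

Section S.
Variables (R : realType) (s : nat).
Local Notation vec := 'rV[R]_s.
Implicit Types a b c x : vec.

Lemma entry_le x i : `|x 0 i| <= `|x|.
Proof.
have /mapP[j Hj ->] : `|x 0 i| \in [seq `|x k.1 k.2| | k : 'I_1 * 'I_s].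
  by apply/mapP; exists (ord0, i) => //=; rewrite mem_enum.
by rewrite [leRHS]/normr /= mx_normrE; apply/bigmax_geP; right => /=; exists j.
Qed.

Lemma dotvC a b : dotv a b = dotv b a.
Proof. by apply: eq_bigr => i _; rewrite mulrC. Qed.

Lemma dotvDl a b c : dotv (a + b) c = dotv a c + dotv b c.
Proof. by rewrite /dotv -big_split; apply: eq_bigr => i _; rewrite mxE mulrDl. Qed.

Lemma dotvNl a b : dotv (- a) b = - dotv a b.
Proof. by rewrite /dotv -sumrN; apply: eq_bigr => i _; rewrite mxE mulNr. Qed.

Lemma dotvZl (k : R) a b : dotv (k *: a) b = k * dotv a b.
Proof. by rewrite /dotv mulr_sumr; apply: eq_bigr => i _; rewrite mxE mulrA. Qed.

Lemma dotvBl a b c : dotv (a - b) c = dotv a c - dotv b c.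
Proof. by rewrite dotvDl dotvNl. Qed.

Lemma dotvDr a b c : dotv c (a + b) = dotv c a + dotv c b.
Proof. by rewrite dotvC dotvDl !(dotvC c). Qed.
Lemma dotvBr a b c : dotv c (a - b) = dotv c a - dotv c b.
Proof. by rewrite dotvC dotvBl !(dotvC c). Qed.
Lemma dotvZr (k : R) a b : dotv b (k *: a) = k * dotv b a.
Proof. by rewrite dotvC dotvZl dotvC. Qed.

Lemma dotv_ge0 a : 0 <= dotv a a.
Proof. by apply: sumr_ge0 => i _; rewrite -expr2 sqr_ge0. Qed.

Lemma dotv_bound a b : `|dotv a b| <= s%:R * (`|a| * `|b|).
Proof.
apply: le_trans (ler_norm_sum _ _ _) _.
have -> : s%:R * (`|a| * `|b|) = \sum_(i < s) (`|a| * `|b|).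
  by rewrite sumr_const card_ord mulr_natl.
apply: ler_sum => i _; rewrite normrM; apply: ler_pM => //; exact: entry_le.
Qed.

Lemma sq_le_dotv a : `|a| ^+ 2 <= dotv a a.
Proof.
have [a0|an0] := eqVneq (mx_norm a) 0.
  by rewrite /normr /= a0 expr0n /= dotv_ge0.
have [[i j] /= Hi] := mx_norm_neq0 an0.
rewrite /normr /= Hi (ord1 i) /dotv (bigD1 j) //= real_normK ?num_real //.
rewrite lerDl; apply: sumr_ge0 => k _; rewrite -expr2 sqr_ge0 //.
Qed.


Lemma inv_small (e : R) : 0 < e -> \forall k \near \oo, (k.+1%:R : R)^-1 < e.
Proof.
move=> e0; near=> k.
rewrite invf_plt ?posrE //.
have : e^-1 < k%:R by near: k; exact: nbhs_infty_gtr.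
by move/lt_le_trans; apply; rewrite ler_nat.
Unshelve. all: by end_near.
Qed.

Lemma cvg_inv (V : normedModType R) (u : nat -> V) (l : V) :
  (forall k, `|u k - l| < (k.+1%:R)^-1) -> u @ \oo --> l.
Proof.
move=> H; apply/cvgrPdist_lt => e e0.
near=> k; rewrite distrC; apply: lt_trans (H k) _.
near: k; exact: inv_small.
Unshelve. all: by end_near.
Qed.

Lemma TCP (Om : set vec) z w : tangent_cone Om z w <->
  Om z /\ forall e d : R, 0 < e -> 0 < d -> exists t w',
    [/\ 0 < t, t < d, `|w' - w| < e & Om (z + t *: w')].
Proof.
split.
  move=> [Oz [t [wk [tp [tc [wc Ok]]]]]]; split => // e d e0 d0.
  move/cvgrPdist_lt: tc => /(_ d d0) tc.
  move/cvgrPdist_lt: wc => /(_ e e0) wc.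
  have [k [h1 h2]] := filter_ex (filterI tc wc).
  exists (t k), (wk k); split => //.
    by move: h1; rewrite sub0r normrN gtr0_norm.
  by rewrite distrC.
move=> [Oz H]; split => //.
have /choice [f Hf] : forall k : nat, exists p : R * vec,
    [/\ 0 < p.1, p.1 < (k.+1%:R)^-1, `|p.2 - w| < (k.+1%:R)^-1 & Om (z + p.1 *: p.2)].
  move=> k; have kp : 0 < k.+1%:R^-1 :> R by rewrite invr_gt0 ltr0Sn.
  have [t [w' Ht]] := H _ _ kp kp.
  by exists (t, w').
exists (fun k => (f k).1), (fun k => (f k).2); split; first by move=> k; case: (Hf k).
split; last split; last by move=> k; case: (Hf k).
  apply: cvg_inv => k; case: (Hf k) => h1 h2 _ _.
  by rewrite subr0 gtr0_norm.
by apply: cvg_inv => k; case: (Hf k).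
Qed.


Lemma LNP (Om : set vec) z zs : limiting_normal_cone Om z zs <->
  Om z /\ forall e : R, 0 < e -> exists p n,
    [/\ `|p - z| < e, regular_normal_cone Om p n & `|n - zs| < e].
Proof.
split.
  move=> [Oz [zk [zsk [zc [Ok [zsc Hk]]]]]]; split => // e e0.
  move/cvgrPdist_lt: zc => /(_ e e0) zc.
  move/cvgrPdist_lt: zsc => /(_ e e0) zsc.
  have [k [h1 h2]] := filter_ex (filterI zc zsc).
  by exists (zk k), (zsk k); split => //; rewrite distrC.
move=> [Oz H]; split => //.
have /choice [f Hf] : forall k : nat, exists p : vec * vec,
    [/\ `|p.1 - z| < (k.+1%:R)^-1, regular_normal_cone Om p.1 p.2
      & `|p.2 - zs| < (k.+1%:R)^-1].
  move=> k; have kp : 0 < k.+1%:R^-1 :> R by rewrite invr_gt0 ltr0Sn.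
  have [p [n Hp]] := H _ kp.
  by exists (p, n).
exists (fun k => (f k).1), (fun k => (f k).2); split.
  by apply: cvg_inv => k; case: (Hf k).
split; first by move=> k; case: (Hf k) => _ [].
split; last by move=> k; case: (Hf k).
by apply: cvg_inv => k; case: (Hf k).
Qed.

Lemma RN_LN (Om : set vec) z : regular_normal_cone Om z `<=` limiting_normal_cone Om z.
Proof.
move=> zs Hz; apply/LNP; split; first by case: Hz.
by move=> e e0; exists z, zs; rewrite !subrr normr0.
Qed.

Lemma LN_approx (Om : set vec) z zs : Om z ->
  (forall e : R, 0 < e -> exists zs', limiting_normal_cone Om z zs' /\ `|zs' - zs| < e) ->
  limiting_normal_cone Om z zs.
Proof.
move=> Oz H; apply/LNP; split => // e e0.
have e2 : 0 < e / 2 by rewrite divr_gt0.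
have [zs' [/LNP [_ H'] h]] := H _ e2.
have [p [n [h1 h2 h3]]] := H' _ e2.
exists p, n; split => //; first by apply: lt_trans h1 _; rewrite ltr_pdivrMr // ltr_pMr // ltr1n.
have -> : n - zs = (n - zs') + (zs' - zs) by rewrite addrA subrK.
by apply: le_lt_trans (ler_normD _ _) _; rewrite (splitr e) ltrD.
Qed.

Lemma closedP (A : set vec) : closed A <->
  forall q, (forall e : R, 0 < e -> exists y, A y /\ `|y - q| < e) -> A q.
Proof.
split.
  move=> cA q H; apply: cA => B /nbhs_ballP [e e0 Hb].
  have [y [Ay hy]] := H e e0; exists y; split => //; apply: Hb.
  by rewrite -ball_normE /ball_ /= distrC.
move=> H q cq; apply: H => e e0.
have [y [Ay By]] := cq _ (nbhsx_ballx q e e0).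
by exists y; split => //; move: By; rewrite -ball_normE /ball_ /= distrC.
Qed.

Lemma TC_closed (Om : set vec) z : closed (tangent_cone Om z).
Proof.
apply/closedP => q H.
have [y0 [/TCP [Oz _] _]] := H 1 ltr01.
apply/TCP; split => // e d e0 d0.
have e2 : 0 < e / 2 by rewrite divr_gt0.
have [y [/TCP [_ Hy] hy]] := H _ e2.
have [t [w' [t0 td hw Ow]]] := Hy _ _ e2 d0.
exists t, w'; split => //.
have -> : w' - q = (w' - y) + (y - q) by rewrite addrA subrK.
by apply: le_lt_trans (ler_normD _ _) _; rewrite (splitr e) ltrD.
Qed.


Lemma cvg_dot {T : Type} (F : set_system T) {FF : Filter F} (u1 u2 : T -> vec) l1 l2 :
  u1 @ F --> l1 -> u2 @ F --> l2 ->
  (fun k => dotv (u1 k) (u2 k)) @ F --> dotv l1 l2.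
Proof.
move=> h1 h2; rewrite /dotv.
apply: (cvg_big add_continuous) => i _; apply: cvgM.
  exact: (continuous_cvg _ (@coord_continuous R 1 s 0 i (l1)) h1).
exact: (continuous_cvg _ (@coord_continuous R 1 s 0 i (l2)) h2).
Qed.

Lemma cont_E (u : vec) : continuous (fun q : vec => dotv (u - q) (u - q)).
Proof.
move=> q.
have h : (fun y : vec => u - y) @ nbhs q --> u - q.
  by apply: cvgB; [exact: cvg_cst | exact: cvg_id].
exact: (cvg_dot h h).
Qed.

Lemma E_le (a : vec) : dotv a a <= s%:R * `|a| ^+ 2.
Proof. by rewrite expr2; apply: le_trans (ler_norm _) (dotv_bound a a). Qed.

Lemma subseq_cvg {V : topologicalType} (u : nat -> V) (l : V) (phi : nat -> nat) :
  (forall j, (j <= phi j)%N) -> u @ \oo --> l -> (u \o phi) @ \oo --> l.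
Proof.
move=> hphi hu; apply: cvg_comp hu.
move=> A [N _ HN]; exists N => // j /= hj; apply: HN => /=.
exact: leq_trans hj (hphi j).
Qed.

Lemma BW (a : nat -> vec) (M : R) : (forall k, `|a k| <= M) ->
  exists (phi : nat -> nat) (q : vec), (forall j, (j <= phi j)%N) /\ (a \o phi) @ \oo --> q.
Proof.
move=> Ha.
pose A := closed_ball_ Num.norm (0 : vec) M.
have cA : compact A.
  apply: bounded_closed_compact; last exact: closed_closed_ball_.
  exists M; split; first exact: num_real.
  move=> M' hM' y; rewrite /A /closed_ball_ /= sub0r normrN => hy.
  exact: le_trans hy (ltW hM').
have FA : (a @ \oo) A.
  by exists 0%N => // k _ /=; rewrite /A /closed_ball_ /= sub0r normrN.
have [q [Aq clq]] := cA _ _ FA.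
have /choice [phi Hphi] : forall j : nat, exists k : nat,
    (j <= k)%N /\ `|a k - q| < (j.+1%:R)^-1.
  move=> j; have jp : 0 < j.+1%:R^-1 :> R by rewrite invr_gt0 ltr0Sn.
  have Fj : (a @ \oo) [set y | exists k, (j <= k)%N /\ y = a k].
    by exists j => // k hk; exists k.
  have [y [[k [hk ->]] hy]] := clq _ _ Fj (nbhsx_ballx q _ jp).
  by exists k; split => //; move: hy; rewrite -ball_normE /ball_ /= distrC.
exists phi, q; split; first by move=> j; case: (Hphi j).
by apply: cvg_inv => j; case: (Hphi j).
Qed.


Lemma NP (Ck : set vec) (u w0 : vec) : closed Ck -> Ck w0 ->
  exists q, Ck q /\ forall q', Ck q' ->
    dotv (u - q) (u - q) <= dotv (u - q') (u - q').
Proof.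
move=> cC Cw0.
pose rho := (s%:R + 1) * `|u - w0|.
pose A := Ck `&` closed_ball_ Num.norm u rho.
have Aw0 : A w0.
  split => //; rewrite /closed_ball_ /rho /=.
  by rewrite mulrDl mul1r lerDr mulr_ge0.
have A0 : A !=set0 by exists w0.
have cA : compact A.
  apply: bounded_closed_compact; last by apply: closedI => //; exact: closed_closed_ball_.
  exists (`|u| + rho); split; first exact: num_real.
  move=> M' hM' y [_ hy]; apply: le_trans (ltW hM').
  have -> : y = u - (u - y) by rewrite opprB addrC subrK.
  by apply: le_trans (ler_normB _ _) _; rewrite lerD2l.
have [q Aq Hq] := EVT_min_rV A0 cA (continuous_subspaceT (cont_E (u:=u))).
move: Aq; rewrite inE => -[Cq _].
exists q; split => // q' Cq'.
have [hq'|hq'] := leP `|u - q'| rho.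
  by apply: Hq; rewrite inE.
have h1 := Hq w0 (mem_set Aw0).
have h2 := E_le (u - w0).
have h3 := sq_le_dotv (u - q').
have n0 : 0 <= `|u - w0| by [].
have S0 : 0 <= s%:R :> R by [].
have r0 : 0 <= rho by rewrite /rho mulr_ge0 // addr_ge0.
have h4 : s%:R * `|u - w0| ^+ 2 <= rho ^+ 2.
  rewrite /rho exprMn ler_wpM2r ?sqr_ge0 //. nra.
have h5 : rho ^+ 2 <= `|u - q'| ^+ 2.
  by rewrite ler_sqr ?ltW // nnegrE.
by apply: le_trans h1 _; apply: le_trans h2 _; apply: le_trans h4 _; apply: le_trans h5 _.
Qed.

Lemma Prox (C : set vec) p r (c : R) : C p -> 0 <= c ->
  (forall y, C y -> 2 * dotv r (y - p) <= c * dotv (y - p) (y - p)) ->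
  regular_normal_cone C p r.
Proof.
move=> Cp c0 H; split => // w [_ [t [wk [tp [tc [wc Ck]]]]]].
have hk : forall k, dotv r (wk k) <= c / 2 * (t k * dotv (wk k) (wk k)).
  move=> k; have := H _ (Ck k).
  rewrite addrAC subrr add0r dotvZl dotvZr dotvZr => h.
  have tk := tp k.
  have e0 := dotv_ge0 (wk k).
  nra.
have l1 : (fun k => dotv r (wk k)) @ \oo --> dotv r w.
  exact: (cvg_dot (cvg_cst r) wc).
have l2 : (fun k => c / 2 * (t k * dotv (wk k) (wk k))) @ \oo --> c / 2 * (0 * dotv w w).
  apply: cvgM; first exact: cvg_cst.
  apply: cvgM => //; exact: cvg_dot.
rewrite mul0r mulr0 in l2.
apply: (ler_cvg_to l1 l2).
by near=> k; exact: hk.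
Unshelve. all: by end_near.
Qed.


Lemma cvg0_bound (x : nat -> R) (c : R) : 0 <= c ->
  (forall j, 0 <= x j <= c * (j.+1%:R)^-1) -> x @ \oo --> 0.
Proof.
move=> c0 H; apply/cvgrPdist_lt => e e0.
have e1 : 0 < e / (c + 1) by rewrite divr_gt0 // ltr_wpDl.
near=> j; rewrite sub0r normrN.
have /andP [h1 h2] := H j.
rewrite ger0_norm //; apply: le_lt_trans h2 _.
have hj : (j.+1%:R)^-1 < e / (c + 1) by near: j; exact: inv_small.
have hp : 0 < (j.+1%:R : R)^-1 by rewrite invr_gt0 ltr0Sn.
have -> : e = (e / (c + 1)) * (c + 1) by rewrite divfK // gt_eqF // ltr_wpDl.
have e2 := e1; move: hj hp e2; set E := e / (c + 1); set y := (j.+1%:R)^-1 => hj hp e2.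
nra.
Unshelve. all: by end_near.
Qed.

Lemma inv_mono (j k : nat) : (j <= k)%N -> (k.+1%:R : R)^-1 <= (j.+1%:R)^-1.
Proof. by move=> h; rewrite lef_pV2 ?posrE ?ltr0Sn // ler_nat. Qed.

Lemma aux1 (D E rr t a : R) : E <= 2 * t * D -> rr * rr <= E -> D <= a * rr ->
  0 < t -> 0 < rr -> rr <= 2 * a * t.
Proof.
move=> h1 h2 h3 t0 r0.
have h7 : t * D <= t * (a * rr) by rewrite ler_pM2l.
have h8 : rr * rr <= (2 * a * t) * rr by lra.
by rewrite -(ler_pM2r r0).
Qed.

Lemma aux2 (D E rr t eta X : R) : E <= 2 * t * D -> rr * rr <= E -> eta * t < rr ->
  0 < t -> 0 < rr -> D = rr * X -> eta / 2 <= X.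
Proof.
move=> h1 h2 h3 t0 r0 hD; rewrite hD in h1.
have h4 : eta * t * rr < rr * rr by rewrite ltr_pM2r.
have h5 : (eta * rr) * t < (2 * X * rr) * t by lra.
have h6 : eta * rr < 2 * X * rr by rewrite -(ltr_pM2r t0).
have h7 : eta < 2 * X by rewrite -(ltr_pM2r r0).
lra.
Qed.

Lemma ClaimA (T : set vec) w v (eta : R) : regular_normal_cone T w v -> 0 < eta ->
  exists2 tau : R, 0 < tau & forall q, T q ->
    dotv (q - w) (q - w) <= 2 * tau * dotv v (q - w) -> `|q - w| <= eta * tau.
Proof.
move=> [Tw Hv] eta0; apply: contrapT => Hn.
have /choice [g Hg] : forall k : nat, exists q, [/\ T q,
    dotv (q - w) (q - w) <= 2 * (k.+1%:R)^-1 * dotv v (q - w)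
    & eta * (k.+1%:R)^-1 < `|q - w|].
  move=> k; apply: contrapT => Hk; apply: Hn; exists (k.+1%:R^-1).
    by rewrite invr_gt0 ltr0Sn.
  move=> q Tq HE; rewrite leNgt; apply/negP => hlt; apply: Hk; exists q; split => //.
pose r k := `|g k - w|.
pose d k := (r k)^-1 *: (g k - w).
have tpos : forall k, 0 < (k.+1%:R : R)^-1 by move=> k; rewrite invr_gt0 ltr0Sn.
have rpos : forall k, 0 < r k.
  by move=> k; case: (Hg k) => _ _ h; apply: lt_trans h; rewrite mulr_gt0.
have dn : forall k, `|d k| <= 1.
  by move=> k; rewrite /d normrZ gtr0_norm ?invr_gt0 // mulVf // gt_eqF.
have rb : forall k, r k <= 2 * s%:R * `|v| * (k.+1%:R)^-1.
  move=> k; case: (Hg k) => _ h1 h2.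
  have h3 := sq_le_dotv (g k - w).
  have h4 := dotv_bound v (g k - w).
  have h5 := ler_norm (dotv v (g k - w)).
  have := rpos k; have := tpos k; rewrite -/(r k) in h2 h3 h4 *.
  move=> t0 r0.
  have h6 : dotv v (g k - w) <= s%:R * `|v| * r k by rewrite -mulrA; exact: le_trans h5 h4.
  rewrite expr2 in h3.
  by move: (aux1 h1 h3 h6 t0 r0); rewrite !mulrA.
have dv : forall k, eta / 2 <= dotv v (d k).
  move=> k; case: (Hg k) => _ h1 h2.
  have h3 := sq_le_dotv (g k - w).
  rewrite /d dotvZr expr2 in h3 *.
  have := rpos k; have := tpos k; rewrite -/(r k) in h2 h3 *.
  move=> t0 r0; apply: (aux2 h1 h3 _ t0 r0).
    exact: h2.
  by rewrite mulVKf // gt_eqF.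
have [phi [dd [hphi hd]]] := BW dn.
have Td : tangent_cone T w dd.
  split => //; exists (r \o phi), (d \o phi); split; first by move=> j; exact: rpos.
  split.
    apply: (@cvg0_bound _ (2 * s%:R * `|v|)); first by rewrite !mulr_ge0.
    move=> j; apply/andP; split; first exact/ltW/rpos.
    apply: le_trans (rb _) _; apply: ler_wpM2l; first by rewrite !mulr_ge0.
    exact: inv_mono.
  split => // j; rewrite /= /d scalerA mulfV ?gt_eqF // scale1r addrC subrK.
  by case: (Hg (phi j)).
have := Hv _ Td.
have : eta / 2 <= dotv v dd.
  apply: (ler_cvg_to (cvg_cst (eta / 2)) (cvg_dot (cvg_cst v) hd)).
  by near=> j; exact: dv.
move=> h1 h2; have : 0 < eta / 2 by rewrite divr_gt0.
lra.
Unshelve. all: by end_near.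
Qed.


Lemma Eexp a b : dotv (a - b) (a - b) = dotv a a - 2 * dotv a b + dotv b b.
Proof. rewrite dotvBl !dotvBr (dotvC b a); ring. Qed.

Lemma closed_resc (C : set vec) x (t : R) : closed C -> 0 < t ->
  closed [set q | C (x + t *: q)].
Proof.
move=> /closedP cC t0; apply/closedP => q H; apply: cC => e e0.
have [y [Cy hy]] := H (e / t) (divr_gt0 e0 t0).
exists (x + t *: y); split => //.
rewrite opprD addrACA subrr add0r -scalerBr normrZ gtr0_norm //.
by rewrite -ltr_pdivlMl // mulrC.
Qed.

Lemma norm_bound_sq (a : vec) (c : R) : 0 <= c -> dotv a a <= c ^+ 2 -> `|a| <= c.
Proof.
move=> c0 h; have := le_trans (sq_le_dotv a) h.
by rewrite ler_sqr // nnegrE.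
Qed.


Lemma key (C : set vec) x w v : closed C -> tangent_cone C x w ->
  regular_normal_cone (tangent_cone C x) w v -> limiting_normal_cone C x v.
Proof.
move=> cC Tw Hv; have Cx : C x by case: Tw.
apply/LNP; split => // e e0.
pose eta := e / 4.
have eta0 : 0 < eta by rewrite divr_gt0.
have [tau tau0 HA] := ClaimA Hv eta0.
have Tw' := Tw.
move: Tw => [_ [t [wk [tp [tc [wc Ck]]]]]].
pose u := w + tau *: v.
have /choice [q Hq] : forall k, exists qk, C (x + t k *: qk) /\
    forall q', C (x + t k *: q') -> dotv (u - qk) (u - qk) <= dotv (u - q') (u - q').
  move=> k; apply: (NP (Ck:=[set q | C (x + t k *: q)]) (w0:=wk k) u).
    exact: closed_resc.
  exact: Ck.
have S0 : 0 <= s%:R :> R by [].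
pose beta := `|tau *: v| + 1.
pose B := `|u| + (s%:R + 1) * beta.
have beta0 : 0 <= beta by rewrite addr_ge0.
have B0 : 0 <= B by rewrite addr_ge0 // mulr_ge0 // addr_ge0.
have [K0 _ HK0] := (cvgrPdist_lt _ _).1 wc 1 ltr01.
have e1 : 0 < e / (B + 1) by rewrite divr_gt0 // ltr_wpDl.
have [K1 _ HK1] := (cvgrPdist_lt _ _).1 tc _ e1.
pose K := maxn K0 K1.
have qB : forall k, (K0 <= k)%N -> `|q k| <= B.
  move=> k hk.
  have h1 : `|u - wk k| <= beta.
    have -> : u - wk k = tau *: v + (w - wk k).
      by rewrite /u [w + _]addrC -addrA.
    by apply: le_trans (ler_normD _ _) _; rewrite lerD2l ltW // HK0.
  have h2 : dotv (u - q k) (u - q k) <= ((s%:R + 1) * beta) ^+ 2.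
    apply: le_trans ((Hq k).2 _ (Ck k)) _.
    apply: le_trans (E_le _) _.
    have h3 : `|u - wk k| ^+ 2 <= beta ^+ 2 by rewrite ler_sqr // nnegrE.
    rewrite exprMn.
    have h4 : s%:R <= (s%:R + 1) ^+ 2 :> R by nra.
    have h5 : 0 <= `|u - wk k| ^+ 2 by rewrite sqr_ge0.
    apply: le_trans (_ : s%:R * beta ^+ 2 <= _); first by rewrite ler_wpM2l.
    by rewrite ler_wpM2r // sqr_ge0.
  have h6 := norm_bound_sq (mulr_ge0 (addr_ge0 S0 ler01) beta0) h2.
  have -> : q k = u - (u - q k) by rewrite opprB addrC subrK.
  by apply: le_trans (ler_normB _ _) _; rewrite lerD2l.
have [k [hkK hk]] : exists k, (K <= k)%N /\ `|q k - w| <= 2 * eta * tau.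
  apply: contrapT => Hn.
  have Hn' : forall k, (K <= k)%N -> 2 * eta * tau < `|q k - w|.
    move=> k hk; rewrite ltNge; apply/negP => h; apply: Hn; by exists k.
  pose a j := q (j + K)%N.
  have aB : forall j, `|a j| <= B.
    by move=> j; apply: qB; rewrite /a (leq_trans (leq_maxl K0 K1)) // leq_addl.
  have [phi [qi [hphi hqi]]] := BW aB.
  pose psi j := (phi j + K)%N.
  have hpsi : forall j, (j <= psi j)%N.
    by move=> j; apply: leq_trans (hphi j) _; rewrite leq_addr.
  have Tqi : tangent_cone C x qi.
    split => //; exists (t \o psi), (a \o phi); split; first by move=> j; exact: tp.
    split; first exact: subseq_cvg.
    split => // j; exact: (Hq (psi j)).1.
  have h1 : dotv (u - qi) (u - qi) <= dotv (u - w) (u - w).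
    have c1 : (fun j => u - (a \o phi) j) @ \oo --> u - qi.
      by apply: cvgB; [exact: cvg_cst | exact: hqi].
    have c2 : (fun j => u - (wk \o psi) j) @ \oo --> u - w.
      by apply: cvgB; [exact: cvg_cst | exact: subseq_cvg].
    apply: (ler_cvg_to (cvg_dot c1 c1) (cvg_dot c2 c2)).
    by near=> j; exact: (Hq (psi j)).2 _ (Ck (psi j)).
  have h2 : 2 * eta * tau <= `|qi - w|.
    have c1 : (fun j => `|(a \o phi) j - w|) @ \oo --> `|qi - w|.
      by apply: cvg_norm; apply: cvgB; [exact: hqi | exact: cvg_cst].
    apply: (ler_cvg_to (cvg_cst _) c1).
    near=> j; apply/ltW/Hn'; rewrite /= leq_addl //.
  have h3 : dotv (qi - w) (qi - w) <= 2 * tau * dotv v (qi - w).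
    have e1' : u - qi = tau *: v - (qi - w).
      by rewrite /u opprB [w + _]addrC -addrA.
    have e2' : u - w = tau *: v by rewrite /u addrC addKr.
    rewrite e1' e2' Eexp [dotv (tau *: v) (qi - w)]dotvZl in h1.
    lra.
  have := HA _ Tqi h3.
  have : 0 < eta * tau by rewrite mulr_gt0.
  lra.
have hkK0 : (K0 <= k)%N by apply: leq_trans hkK; rewrite leq_maxl.
have hkK1 : (K1 <= k)%N by apply: leq_trans hkK; rewrite leq_maxr.
have tk := tp k.
have tke : t k < e / (B + 1).
  by have := HK1 _ hkK1; rewrite /= sub0r normrN gtr0_norm.
exists (x + t k *: q k), (tau^-1 *: (u - q k)); split.
- rewrite addrAC subrr add0r normrZ gtr0_norm //.
  have h1 : t k * `|q k| <= t k * B.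
    by apply: ler_wpM2l; [exact: ltW | exact: qB hkK0].
  apply: le_lt_trans h1 _.
  move: tke; rewrite ltr_pdivlMr ?ltr_wpDl // => tke.
  nra.
- apply: Prox (Hq k).1 (_ : 0 <= (tau * t k)^-1) _.
    by rewrite invr_ge0 mulr_ge0 // ltW.
  move=> y Cy.
  pose q' := (t k)^-1 *: (y - x).
  have Cq' : C (x + t k *: q') by rewrite /q' scalerA mulfV ?gt_eqF // scale1r addrC subrK.
  have hmin := (Hq k).2 _ Cq'.
  have ey : y - (x + t k *: q k) = t k *: (q' - q k).
    by rewrite scalerBr /q' scalerA mulfV ?gt_eqF // scale1r opprD addrA.
  have eu : u - q' = (u - q k) - (q' - q k) by rewrite opprB addrA subrK.
  rewrite eu (Eexp (u - q k) (q' - q k)) in hmin.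
  rewrite ey !dotvZl !dotvZr.
  have hb : 2 * dotv (u - q k) (q' - q k) <= dotv (q' - q k) (q' - q k) by lra.
  have -> : 2 * (tau^-1 * (t k * dotv (u - q k) (q' - q k)))
    = (tau^-1 * t k) * (2 * dotv (u - q k) (q' - q k)) by ring.
  have -> : (tau * t k)^-1 * (t k * (t k * dotv (q' - q k) (q' - q k)))
    = (tau^-1 * t k) * dotv (q' - q k) (q' - q k).
    have tn : t k != 0 by rewrite gt_eqF.
    have un : tau != 0 by rewrite gt_eqF.
    by field; rewrite un tn.
  by rewrite ler_wpM2l // mulr_ge0 // ltW // invr_gt0.
- have -> : tau^-1 *: (u - q k) - v = tau^-1 *: (w - q k).
    by rewrite /u [w + _]addrC -addrA scalerDr scalerA mulVf ?gt_eqF // scale1r addrAC subrr add0r.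
  rewrite normrZ gtr0_norm ?invr_gt0 // distrC.
  rewrite -ltr_pdivlMl ?invr_gt0 // invrK.
  apply: le_lt_trans hk _; rewrite /eta.
  have : 0 < e * tau by rewrite mulr_gt0.
  lra.
Unshelve. all: by end_near.
Qed.


Lemma key2 (C : set vec) x w : closed C ->
  limiting_normal_cone (tangent_cone C x) w `<=` limiting_normal_cone C x.
Proof.
move=> cC zs /LNP [Tw H]; have Cx : C x by case: Tw.
apply: LN_approx Cx _ => e e0.
have [p [n [_ Hn hn]]] := H e e0.
exists n; split => //; apply: (key cC _ Hn); by case: Hn.
Qed.

Lemma TC_cone (Om : set vec) z w (lam : R) : tangent_cone Om z w -> 0 < lam ->
  tangent_cone Om z (lam *: w).
Proof.
move=> /TCP [Oz H] l0; apply/TCP; split => // e d e0 d0.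
have [t [w' [t0 td hw Ow]]] := H (e / lam) (d * lam) (divr_gt0 e0 l0) (mulr_gt0 d0 l0).
exists (t / lam), (lam *: w'); split.
- by rewrite divr_gt0.
- by rewrite ltr_pdivrMr.
- by rewrite -scalerBr normrZ gtr0_norm // -ltr_pdivlMl // mulrC.
- by rewrite scalerA mulfVK ?gt_eqF.
Qed.

Lemma TC_zero (Om : set vec) z : Om z -> tangent_cone Om z 0.
Proof.
move=> Oz; apply/TCP; split => // e d e0 d0.
exists (d / 2), 0; split.
- by rewrite divr_gt0.
- by rewrite ltr_pdivrMr // ltr_pMr // ltr1n.
- by rewrite subrr normr0.
- by rewrite scaler0 addr0.
Qed.

Lemma TCK (K : set vec) : closed K -> K 0 ->
  (forall w (lam : R), K w -> 0 < lam -> K (lam *: w)) -> tangent_cone K 0 = K.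
Proof.
move=> cK K0 Kc; apply/seteqP; split => w.
  move=> /TCP [_ H]; apply: (proj1 (closedP K) cK) => e e0.
  have [t [w' [t0 td hw Ow]]] := H e 1 e0 ltr01.
  exists w'; split => //.
  have := Kc _ (t^-1) Ow; rewrite add0r scalerA mulVf ?gt_eqF // scale1r; apply.
  by rewrite invr_gt0.
move=> Kw; apply/TCP; split => // e d e0 d0.
exists (d / 2), w; split.
- by rewrite divr_gt0.
- by rewrite ltr_pdivrMr // ltr_pMr // ltr1n.
- by rewrite subrr normr0.
- by rewrite add0r; apply: Kc => //; rewrite divr_gt0.
Qed.

End S.

Unset Implicit Arguments.

Theorem lemma4p3 (R : realType) (s : nat) (D : set 'rV[R]_s) (y : 'rV[R]_s)
  (hD : closed D) (hy : D y) (l : nat) (hl : (1 <= l)%N)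
  (v : nat -> 'rV[R]_s) :
  regular_normal_cone (higher_tangent_cone D y v l.-1) (v l)
    `<=` limiting_normal_cone (higher_tangent_cone D y v l.-1) (v l) /\
  limiting_normal_cone (higher_tangent_cone D y v l.-1) (v l)
    `<=` limiting_normal_cone (tangent_cone D y) 0 /\
  limiting_normal_cone (tangent_cone D y) 0 `<=` limiting_normal_cone D y.
Proof.
split; first exact: RN_LN.
split; last exact: key2.
case: l hl => // m _ /=.
have hcl : forall k, closed (higher_tangent_cone D y v k).
  by case=> [|k] /=; exact: TC_closed.
have ind : forall k, limiting_normal_cone (higher_tangent_cone D y v k) (v k.+1)
    `<=` limiting_normal_cone (tangent_cone D y) (v 1%N).
  elim=> [|k IH] //=.
  move=> zs /(key2 (hcl k)); exact: IH.
move=> zs /ind.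
have E : tangent_cone (tangent_cone D y) 0 = tangent_cone D y.
  apply: TCK; first exact: TC_closed.
    exact: TC_zero.
  by move=> w lam Tw l0; exact: TC_cone.
have H : limiting_normal_cone (tangent_cone (tangent_cone D y) 0) (v 1%N)
    `<=` limiting_normal_cone (tangent_cone D y) 0.
  by apply: key2; exact: TC_closed.
by rewrite E in H; apply: H.
Qed.
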